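(* Let $A\in\mathbb{R}^{n\times n}$ be symmetric positive definite, $\Pi\in\mathbb{R}^{n\times n}$ symmetric positive definite, and $M_0\in\mathbb{R}^{n\times n}$. For $i\ge0$ let $R_i:=I_n-AM_i$, $Z_i:=\Pi R_i$, $G_i:=-\Pi AZ_i$, and for $i\ge1$ let $M_i$ be the matrix with $$M_i\in M_0+\mathcal{K}_i((\Pi A)^2,G_0)\quad\text{and}\quad R_i\perp\mathcal{K}_i((\Pi A)^2,G_0),$$ where $\mathcal{K}_i((\Pi A)^2,G_0)=\mathrm{span}\{G_0,(\Pi A)^2G_0,\dots,(\Pi A)^{2(i-1)}G_0\}$. Define $P_0:=-G_0$ and, for $i\ge1$, $P_i:=-G_i+\beta_iP_{i-1}$ with $\beta_i=\frac{(R_i,G_i)_F}{(R_{i-1},G_{i-1})_F}$. Then for $i=0,1,\dots$, $$M_{i+1}=M_i+\alpha_iP_i,\qquad \alpha_i=-\frac{(R_i,G_i)_F}{(P_i,AP_i)_F},\qquad R_{i+1}=R_i-\alpha_iAP_i.$$ Furthermore, $P_0,\dots,P_{i-1}$ form an $A$-orthogonal basis (i.e. $(P_j,AP_k)_F=0$ for $j\ne k$) of the Krylov subspace, and $$\mathrm{span}\{P_0,\dots,P_{i-1}\}=\mathrm{span}\{G_0,\dots,G_{i-1}\}=\mathcal{K}_i((\Pi A)^2,G_0).$$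
   Context: The Frobenius inner product is $(X,Y)_F=\operatorname{tr}(X^TY)$, and $\perp$ denotes orthogonality with respect to it. It is assumed that the iteration does not break down (the iterates are uniquely determined and $R_i\neq0$, $P_i\neq0$ for all indices considered). *)

(* Defs.v *)
From mathcomp Require Import all_boot all_order all_algebra.
Set Implicit Arguments. Unset Strict Implicit. Unset Printing Implicit Defensive.
Import Order.TTheory GRing.Theory Num.Theory.
Local Open Scope ring_scope.

Section Defs.
Variables (R : realFieldType) (n : nat).
Notation mx := 'M[R]_n.

Definition frob (X Y : mx) : R := \tr (X^T *m Y).

Definition spd (A : mx) : Prop :=
  A^T = A /\ forall x : 'cV[R]_n, x != 0 -> 0 < (x^T *m A *m x) 0 0.

Definition in_span (k : nat) (V : 'I_k -> mx) (X : mx) : Prop :=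
  exists c : 'I_k -> R, X = \sum_(j < k) c j *: V j.

Definition lin_indep (k : nat) (V : 'I_k -> mx) : Prop :=
  forall c : 'I_k -> R, \sum_(j < k) c j *: V j = 0 -> forall j, c j = 0.

Definition mxpowmul (C : mx) (j : nat) (X : mx) : mx := iter j (mulmx C) X.

Definition krylov (C G0 : mx) (k : nat) (X : mx) : Prop :=
  in_span (fun j : 'I_k => mxpowmul C j G0) X.

Variables (A Pi : mx) (M : nat -> mx).

Definition Res (i : nat) : mx := 1%:M - A *m M i.
Definition Zs (i : nat) : mx := Pi *m Res i.
Definition Gs (i : nat) : mx := - (Pi *m A *m Zs i).

Definition beta (i : nat) : R := frob (Res i) (Gs i) / frob (Res i.-1) (Gs i.-1).

Fixpoint Ps (i : nat) : mx :=
  match i with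
  | 0 => - Gs 0
  | i'.+1 => - Gs i'.+1 + beta i'.+1 *: Ps i'
  end.

Definition alpha (i : nat) : R := - (frob (Res i) (Gs i) / frob (Ps i) (A *m Ps i)).

End Defs.

(* Main.v *)
Require Import Defs.
From mathcomp Require Import all_boot all_order all_algebra.
From mathcomp Require Import ring lra.
Set Implicit Arguments. Unset Strict Implicit. Unset Printing Implicit Defensive.
Import Order.TTheory GRing.Theory Num.Theory.
Local Open Scope ring_scope.

Lemma zid1 (V : zmodType) (a b c z : V) : a - (b + c) = (a - z) - ((b - z) + c).
Proof. by rewrite !opprD !opprK !addrA [a - z - b + z]addrAC subrK. Qed.
Lemma zid2 (V : zmodType) (u x y w : V) : u - x = (u - y - w) - (x - (y + w)).
Proof.
rewrite !opprD !opprK !addrA [u - y - w - x + y]addrAC [u - y - w + y - x + w]addrAC.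
by rewrite [u - y - w + y]addrAC subrK subrK.
Qed.

Section Gen.
Variables (R : realFieldType) (n : nat).
Local Notation mx := 'M[R]_n.
Implicit Types (X Y Z B : mx) (f g : nat -> mx).

Definition S (f : nat -> mx) (i : nat) (X : mx) := in_span (fun j : 'I_i => f j) X.

Lemma S0 f i : S f i 0.
Proof. by exists (fun=> 0); rewrite big1 // => j _; rewrite scale0r. Qed.

Lemma SD f i X Y : S f i X -> S f i Y -> S f i (X + Y).
Proof.
move=> [c ->] [d ->]; exists (fun j => c j + d j); rewrite -big_split /=.
by apply: eq_bigr => j _; rewrite scalerDl.
Qed.

Lemma SZ f i a X : S f i X -> S f i (a *: X).
Proof.
move=> [c ->]; exists (fun j => a * c j); rewrite scaler_sumr.
by apply: eq_bigr => j _; rewrite scalerA.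
Qed.

Lemma SN f i X : S f i X -> S f i (- X).
Proof. by move=> h; rewrite -scaleN1r; apply: SZ. Qed.

Lemma SB f i X Y : S f i X -> S f i Y -> S f i (X - Y).
Proof. by move=> hx hy; apply: SD => //; apply: SN. Qed.

Lemma Ssum (I : Type) (r : seq I) (P : pred I) (F : I -> mx) f i :
  (forall k, P k -> S f i (F k)) -> S f i (\sum_(k <- r | P k) F k).
Proof. by move=> H; apply: (big_ind (S f i)) => //; [exact: S0 | exact: SD]. Qed.

Lemma Sgen f i j : (j < i)%N -> S f i (f j).
Proof.
move=> ji; exists (fun k : 'I_i => (k == Ordinal ji)%:R).
rewrite (bigD1 (Ordinal ji)) //= eqxx scale1r big1 ?addr0 // => k /negbTE ->.
by rewrite scale0r.
Qed.

Lemma Sconv f g i i' X : (forall j, (j < i)%N -> S g i' (f j)) -> S f i X -> S g i' X.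
Proof. by move=> H [c ->]; apply: Ssum => j _; apply: SZ; apply: H. Qed.

Lemma Slin f g i i' (B : mx) X :
  (forall j, (j < i)%N -> S g i' (B *m f j)) -> S f i X -> S g i' (B *m X).
Proof.
move=> H [c ->]; rewrite mulmx_sumr; apply: Ssum => j _.
by rewrite -scalemxAr; apply: SZ; apply: H.
Qed.

Lemma Smono f i i' X : (i <= i')%N -> S f i X -> S f i' X.
Proof. by move=> le; apply: Sconv => j ji; apply: Sgen; exact: leq_trans ji le. Qed.

Lemma S0nil f X : S f 0 X -> X = 0.
Proof. by move=> [c ->]; rewrite big_ord0. Qed.

Lemma frobDr X Y Z : frob X (Y + Z) = frob X Y + frob X Z.
Proof. by rewrite /frob mulmxDr mxtraceD. Qed.
Lemma frobZr X a Y : frob X (a *: Y) = a * frob X Y.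
Proof. by rewrite /frob -scalemxAr mxtraceZ. Qed.
Lemma frob0r X : frob X 0 = 0 :> R.
Proof. by rewrite /frob mulmx0 mxtrace0. Qed.
Lemma frobNr X Y : frob X (- Y) = - frob X Y.
Proof. by rewrite -scaleN1r frobZr mulN1r. Qed.
Lemma frobBr X Y Z : frob X (Y - Z) = frob X Y - frob X Z.
Proof. by rewrite frobDr frobNr. Qed.
Lemma frobC X Y : frob X Y = frob Y X.
Proof. by rewrite /frob -mxtrace_tr trmx_mul trmxK. Qed.
Lemma frobDl X Y Z : frob (Y + Z) X = frob Y X + frob Z X.
Proof. by rewrite frobC frobDr -!(frobC X). Qed.
Lemma frobZl X a Y : frob (a *: Y) X = a * frob Y X.
Proof. by rewrite frobC frobZr frobC. Qed.
Lemma frobNl X Y : frob (- Y) X = - frob Y X.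
Proof. by rewrite frobC frobNr frobC. Qed.
Lemma frobBl X Y Z : frob (Y - Z) X = frob Y X - frob Z X.
Proof. by rewrite frobDl frobNl. Qed.
Lemma frob_mull B X Y : frob (B *m X) Y = frob X (B^T *m Y).
Proof. by rewrite /frob trmx_mul mulmxA. Qed.
Lemma frob_sumr X (I : Type) (r : seq I) (P : pred I) (F : I -> mx) :
  frob X (\sum_(k <- r | P k) F k) = \sum_(k <- r | P k) frob X (F k).
Proof. exact: (big_morph (frob X) (frobDr X) (frob0r X)). Qed.

Lemma Sfun (Z : mx) f i X :
  (forall j, (j < i)%N -> frob Z (f j) = 0) -> S f i X -> frob Z X = 0.
Proof.
move=> H [c ->]; rewrite frob_sumr big1 // => j _.
by rewrite frobZr H ?mulr0.
Qed.

Lemma spd_pos (A : mx) X : spd A -> X != 0 -> 0 < frob X (A *m X).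
Proof.
move=> [_ hA] X0.
have E j : (X^T *m (A *m X)) j j = ((col j X)^T *m A *m col j X) 0 0.
  rewrite colE trmx_mul trmx_delta !mulmxA -rowE -!mulmxA -colE.
  rewrite !mxE; apply: eq_bigr => k _; rewrite !mxE; congr (_ * _); apply: eq_bigr => l _; by rewrite !mxE.
have Hge j : 0 <= (X^T *m (A *m X)) j j.
  rewrite E; case: (eqVneq (col j X) 0) => [->|nz]; last exact: ltW (hA _ nz).
  by rewrite mulmx0 mxE.
have [j Hj] : exists j, col j X != 0.
  case/boolP: [exists j, col j X != 0] => [/existsP//|/existsPn H].
  case/eqP: X0; apply/matrixP => a b; have := H b; rewrite negbK => /eqP hb.
  by have := congr1 (fun Y : 'cV[R]_n => Y a 0) hb; rewrite !mxE.
rewrite /frob /mxtrace (bigD1 j) //=.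
have h1 := hA _ Hj; rewrite -E in h1.
have h2 : 0 <= \sum_(i < n | i != j) (X^T *m (A *m X)) i i by apply: sumr_ge0.
lra.
Qed.

End Gen.

Section Main.
Variables (R : realFieldType) (n : nat) (A Pi : 'M[R]_n) (M : nat -> 'M[R]_n) (N : nat).
Local Notation mx := 'M[R]_n.
Implicit Types (X Y Z B : mx).
Hypothesis hA : spd A.
Hypothesis hPi : spd Pi.
Local Notation T := ((Pi *m A) *m (Pi *m A)).
Local Notation G := (Gs A Pi M).
Local Notation P := (Ps A Pi M).
Local Notation Rs := (Res A M).
Local Notation al := (alpha A Pi M).
Local Notation be := (beta A Pi M).
Local Notation kf := (fun j => mxpowmul T j (G 0)).
Hypothesis hgal : forall i, (1 <= i)%N ->
     krylov T (G 0) i (M i - M 0) /\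
     (forall X, krylov T (G 0) i X -> frob (Rs i) X = 0).
Hypothesis hnb : forall i, (i <= N)%N -> Rs i != 0 /\ P i != 0.

Lemma F_Mk j : S kf j (M j - M 0).
Proof. case: j => [|j]; first by rewrite subrr; apply: S0. exact: (hgal (ltn0Sn j)).1. Qed.

Lemma F_orth j X : S kf j X -> frob (Rs j) X = 0.
Proof.
case: j => [|j]; first by move/S0nil ->; rewrite frob0r.
exact: (hgal (ltn0Sn j)).2.
Qed.

Lemma F_Tk i X : S kf i X -> S kf i.+1 (T *m X).
Proof. by apply: Slin => j ji; apply: (@Sgen _ _ kf i.+1 j.+1). Qed.

Lemma F_Gdiff j k : G j = G k + T *m (M j - M k).
Proof.
rewrite /Gs /Zs /Res !mulmxBr !mulmxA mulmx1.
set a := Pi *m A *m Pi. set b := a *m A *m M j. set c := a *m A *m M k.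
by rewrite !opprB [RHS]addrC subrKA.
Qed.

Lemma F_Gk j : S kf j.+1 (G j).
Proof.
rewrite (F_Gdiff j 0); apply: SD; first exact: (@Sgen _ _ kf j.+1 0).
exact: F_Tk (F_Mk j).
Qed.

Lemma F_Pk j : S kf j.+1 (P j).
Proof.
elim: j => [|j IH]; first by apply: SN; apply: F_Gk.
rewrite [P j.+1]/=; apply: SD; first by apply: SN; apply: F_Gk.
by apply: SZ; apply: Smono (leqnSn _) IH.
Qed.

Lemma F_PG j : S G j.+1 (P j).
Proof.
elim: j => [|j IH]; first by apply: SN; apply: (@Sgen _ _ G 1 0).
rewrite [P j.+1]/=; apply: SD; first by apply: SN; apply: (@Sgen _ _ G j.+2 j.+1).
by apply: SZ; apply: Smono (leqnSn _) IH.
Qed.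

Lemma F_GP j : S P j.+1 (G j).
Proof.
case: j => [|j].
  have -> : G 0 = - P 0 by rewrite /= opprK.
  by apply: SN; apply: (@Sgen _ _ P 1 0).
have -> : G j.+1 = be j.+1 *: P j - P j.+1.
  by rewrite [P j.+1]/= opprD opprK addrC subrK.
apply: SB; last exact: (@Sgen _ _ P j.+2 j.+1).
by apply: SZ; apply: (@Sgen _ _ P j.+2 j).
Qed.

Lemma F_Asym X Y : frob X (A *m Y) = frob Y (A *m X).
Proof. by rewrite frobC frob_mull hA.1. Qed.

Lemma F_GA j Y : frob (G j) (A *m Y) = - frob (Rs j) (T *m Y).
Proof. by rewrite /Gs /Zs frobNl !mulmxA frob_mull !trmx_mul hA.1 hPi.1 !mulmxA. Qed.

Lemma F_GR j k : frob (G j) (Rs k) = frob (Rs j) (G k).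
Proof. by rewrite /Gs /Zs frobNl frobNr !mulmxA frob_mull !trmx_mul hA.1 hPi.1 !mulmxA. Qed.

Lemma F_rho j : Rs j != 0 -> frob (Rs j) (G j) < 0.
Proof.
move=> nz; have PR : Pi *m Rs j != 0.
  by apply/eqP => h; have := spd_pos hPi nz; rewrite h frob0r ltxx.
have h := spd_pos hA PR; rewrite frob_mull hPi.1 mulmxA in h.
rewrite /Gs /Zs frobNr; lra.
Qed.

Lemma F_pi j : P j != 0 -> 0 < frob (P j) (A *m P j).
Proof. exact: spd_pos. Qed.

Lemma F_RP j : frob (Rs j) (P j) = - frob (Rs j) (G j).
Proof.
case: j => [|j]; first by rewrite /= frobNr.
by rewrite [P j.+1]/= frobDr frobNr frobZr (F_orth (F_Pk j)) mulr0 addr0.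
Qed.

Lemma F_GT m : M m.+1 = M m + al m *: P m -> G m.+1 = G m + al m *: (T *m P m).
Proof. by move=> h; rewrite (F_Gdiff m.+1 m) h addrAC subrr add0r scalemxAr. Qed.

Lemma F_al m : (m <= N)%N -> al m != 0.
Proof.
move=> le; have [h1 h2] := hnb le; have r := F_rho h1; have p := F_pi h2.
rewrite /alpha oppr_eq0 mulf_neq0 // ?invr_eq0 ?(ltr0_neq0 r) ?(lt0r_neq0 p) //.

Qed.

Lemma F_TP m i : (m <= N)%N -> M m.+1 = M m + al m *: P m -> (m.+2 <= i)%N ->
  S P i (T *m P m).
Proof.
move=> le h mi.
have -> : T *m P m = (al m)^-1 *: (G m.+1 - G m).
  by rewrite (F_GT h) addrAC subrr add0r scalerA mulVf ?scale1r // F_al.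
apply: SZ; apply: SB; apply: Smono (F_GP _) => //; exact: ltnW.
Qed.

Definition Hq i := (forall j k, (j < i)%N -> (k < i)%N -> j != k -> frob (P j) (A *m P k) = 0)
  /\ (forall j, (j < i)%N -> M j.+1 = M j + al j *: P j)
  /\ (forall X, S kf i X -> S P i X).

Lemma main i : (i <= N.+1)%N -> Hq i.
Proof.
elim: i => [_|i IH hi].
  split; first by []. split; first by [].
  by move=> X /S0nil ->; exact: S0.
have iN : (i <= N)%N by [].
have [conj [rec kp]] := IH (ltnW hi).
have [nzR nzP] := hnb iN.
have newc : forall k, (k < i)%N -> frob (P i) (A *m P k) = 0.
  move=> k ki; destruct i as [|i']; first by [].
  rewrite [P i'.+1]/= frobDl frobNl frobZl F_GA.
  have [ki'|ki'|->] := ltngtP k i'.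
  - rewrite (F_orth (Smono _ (F_Tk (F_Pk k)))) // conj //; last by rewrite gtn_eqF.
    by rewrite oppr0 mulr0 oppr0 addr0.
  - rewrite ltnS leqNgt ki' in ki; by [].
  have hg := F_GT (rec i' (ltnSn i')).
  have o : frob (Rs i'.+1) (G i') = 0 := F_orth (F_Gk i').
  have e : frob (Rs i'.+1) (G i'.+1) = al i' * frob (Rs i'.+1) (T *m P i').
    by rewrite hg frobDr o add0r frobZr.
  have [nzR' nzP'] := hnb (ltnW iN).
  have r' := ltr0_neq0 (F_rho nzR'). have p' := lt0r_neq0 (F_pi nzP').
  rewrite /beta /= e /alpha.
  move: r' p'; set x := frob (Rs i'.+1) _; set r := frob (Rs i') _; set p := frob (P i') _.
  by move=> r' p'; field; rewrite r' p'.
have kp' : forall X, S kf i.+1 X -> S P i.+1 X.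
  move=> X; apply: Sconv => j; rewrite ltnS leq_eqVlt => /orP [/eqP ->|ji]; last first.
    by apply: Smono (leqnSn i) _; apply: kp; apply: Sgen.
  destruct i as [|i']; first exact: (F_GP 0).
  change (S P i'.+2 (T *m mxpowmul T i' (G 0))).
  apply: (@Slin _ _ P _ i'.+1) => [m mi|]; last by apply: kp; apply: (@Sgen _ _ kf).
  apply: F_TP => //; [exact: leq_trans (ltnW mi) iN | exact: rec].
have newrec : M i.+1 = M i + al i *: P i.
  set D := M i.+1 - (M i + al i *: P i).
  have DK : S kf i.+1 D.
    rewrite /D (zid1 _ _ _ (M 0)); apply: SB; first exact: F_Mk.
    apply: SD; first exact: Smono (leqnSn i) (F_Mk i).
    by apply: SZ; apply: F_Pk.
  have o2 : forall Y, S kf i.+1 Y -> frob (Rs i - al i *: (A *m P i)) Y = 0.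
    move=> Y /kp'; apply: Sfun => k; rewrite ltnS leq_eqVlt => /orP [/eqP ->|ki].
      rewrite frobBl frobZl F_RP [frob (A *m P i) _]frobC /alpha.
      have p' := lt0r_neq0 (F_pi nzP).
      move: p'; set r := frob (Rs i) _; set p := frob (P i) _.
      by move=> p'; field; rewrite p'.
    rewrite frobBl frobZl (F_orth (Smono ki (F_Pk k))) frobC -F_Asym newc //.
    by rewrite mulr0 subr0.
  have eR : Rs i.+1 = (Rs i - al i *: (A *m P i)) - A *m D.
    by rewrite /Res /D mulmxBr mulmxDr scalemxAr -zid2.
  have hD : frob D (A *m D) = 0.
    have -> : A *m D = (Rs i - al i *: (A *m P i)) - Rs i.+1.
      by rewrite eR opprB addrC subrK.
    by rewrite frobBr frobC o2 // frobC (F_orth DK) subrr.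
  have : D = 0.
    by case: (eqVneq D 0) => // nz; have := spd_pos hA nz; rewrite hD ltxx.
  by move/eqP; rewrite subr_eq0 => /eqP.
split; last split; last exact: kp'.
- move=> j k jl kl jk; rewrite ltnS leq_eqVlt in jl; rewrite ltnS leq_eqVlt in kl.
  case/orP: jl => [/eqP ej|ji]; case/orP: kl => [/eqP ek|ki].
  + by rewrite ej ek eqxx in jk.
  + by rewrite ej; apply: newc.
  + by rewrite ek F_Asym; apply: newc.
  + exact: conj.
- move=> j; rewrite ltnS leq_eqVlt; case/orP => [/eqP ->|ji]; [exact: newrec | exact: rec].
Qed.

End Main.

Theorem proposition10 (R : realFieldType) (n : nat) (A Pi : 'M[R]_n)
  (M : nat -> 'M[R]_n) (N : nat) :
  spd A -> spd Pi ->
  (* M_i in M_0 + K_i((Pi A)^2, G_0) and R_i orthogonal to K_i((Pi A)^2, G_0), i >= 1 *)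
  (forall i, (1 <= i)%N ->
     krylov ((Pi *m A) *m (Pi *m A)) (Gs A Pi M 0) i (M i - M 0) /\
     (forall X, krylov ((Pi *m A) *m (Pi *m A)) (Gs A Pi M 0) i X ->
        frob (Res A M i) X = 0)) ->
  (* no breakdown up to index N *)
  (forall i, (i <= N)%N -> Res A M i != 0 /\ Ps A Pi M i != 0) ->
  (forall i, (i <= N)%N ->
     M i.+1 = M i + alpha A Pi M i *: Ps A Pi M i /\
     Res A M i.+1 = Res A M i - alpha A Pi M i *: (A *m Ps A Pi M i)) /\
  (forall i, (i <= N.+1)%N ->
     (forall j k : 'I_i, j != k ->
        frob (Ps A Pi M j) (A *m Ps A Pi M k) = 0) /\
     lin_indep (fun j : 'I_i => Ps A Pi M j) /\
     (forall X, in_span (fun j : 'I_i => Ps A Pi M j) X <->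
                in_span (fun j : 'I_i => Gs A Pi M j) X) /\
     (forall X, in_span (fun j : 'I_i => Gs A Pi M j) X <->
                krylov ((Pi *m A) *m (Pi *m A)) (Gs A Pi M 0) i X)).
Proof.
move=> hA hPi hgal hnb.
have main' := main hA hPi hgal hnb.
have [_ [recN _]] := main' N.+1 (leqnn _).
split.
  move=> i iN; have e := recN i iN; split => //.
  by rewrite /Res e mulmxDr scalemxAr opprD addrA.
move=> i hi; have [conj [rec kp]] := main' i hi.
split.
  by move=> j k jk; apply: conj.
split.
  move=> c hc k.
  have hk : (k <= N)%N := leq_trans (ltn_ord k) hi.
  have p' := lt0r_neq0 (F_pi hA (hnb k hk).2).
  have : frob (A *m Ps A Pi M k) (\sum_(j < i) c j *: Ps A Pi M j) = 0.
    by rewrite hc frob0r.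
  rewrite frob_sumr (bigD1 k) //= big1 ?addr0; last first.
    move=> j jk; rewrite frobZr frobC conj ?mulr0 //.
  rewrite frobZr [frob (A *m _) _]frobC.
  by move/eqP; rewrite mulf_eq0 (negbTE p') orbF => /eqP.
split.
  move=> X; change (S (Ps A Pi M) i X <-> S (Gs A Pi M) i X).
  split; apply: Sconv => j ji.
    exact: Smono ji (F_PG A Pi M j).
  exact: Smono ji (F_GP A Pi M j).
move=> X; change (S (Gs A Pi M) i X <-> S (fun j => mxpowmul (Pi *m A *m (Pi *m A)) j (Gs A Pi M 0)) i X).
split.
  apply: Sconv => j ji; exact: Smono ji (F_Gk hgal j).
move=> /kp; apply: Sconv => j ji; exact: Smono ji (F_PG A Pi M j).
Qed.
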